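(* Let $f:\mathbb{R}^\ell\times\mathbb{R}^m\to\mathbb{R}^\ell$ be $C^1$, let $\Lambda$ be a parameter shift with limits $\lambda_\pm$, and let $X$ define a stable path. Let $N\in\mathbb{N}$ be such that $\|[D_xf(X(s),\Lambda(s))]^n\|<\frac14$ for all $s\in\mathbb{R}$ and $n\ge N$. Then, for $r>0$ and $\epsilon>0$ sufficiently small, for all $n\in\{N,N+1,\ldots,N(N+1)\}$ and all $(s,x)\in\mathcal{N}_\epsilon$, $$\|D_x[\pi\circ F_r^n](s,x)\|<\tfrac12.$$
   Context: A parameter shift is a $C^1$ function $\Lambda:\mathbb{R}\to\mathbb{R}^m$ with $\lim_{s\to\pm\infty}\Lambda(s)=\lambda_\pm$ and $\lim_{s\to\pm\infty}\Lambda'(s)=0$. A stable path is given by $X:\mathbb{R}\to\mathbb{R}^\ell$ such that: $X(s)$ is a fixed point of $f(\cdot,\Lambda(s))$ for every $s$; $\{(s,X(s))\}$ is a connected curve; the limits $X_\pm=\lim_{s\to\pm\infty}X(s)$ exist and are fixed points of $f(\cdot,\lambda_\pm)$; and the spectral radius of $D_xf(X(s),\Lambda(s))$ is $<1$ for all $s\in\mathbb{R}\cup\{\pm\infty\}$. For $r\ge0$, $F_r(s,x)=(s+r,f(x,\Lambda(s)))$ and $F_r^n$ is its $n$-fold composition; $\pi(s,x)=x$, and $D_x$ is the derivative with respect to the last $\ell$ coordinates. $\mathcal{N}_\epsilon=\{(s,x):s\in\mathbb{R},\ \|x-X(s)\|\le\epsilon\}$ (Euclidean norm; matrix norms induced).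 *)

(* Defs.v *)
From HB Require Import structures.
From mathcomp Require Import all_boot all_order all_algebra.
From mathcomp Require Import all_classical all_reals all_analysis.
From mathcomp Require Import complex.
Set Implicit Arguments. Unset Strict Implicit. Unset Printing Implicit Defensive.
Import Order.TTheory GRing.Theory Num.Theory.
Import numFieldNormedType.Exports.
Local Open Scope classical_set_scope.
Local Open Scope ring_scope.

Section Defs.
Variable R : realType.

Definition norm2 {n : nat} (v : 'cV[R]_n) : R :=
  Num.sqrt (\sum_(i < n) (v i 0) ^+ 2).

Definition opnorm {k n : nat} (A : 'M[R]_(k, n)) : R :=
  sup [set norm2 (A *m v) | v in [set v : 'cV[R]_n | norm2 v <= 1]].

Definition fderiv {n k : nat} (F : 'cV[R]_n -> 'cV[R]_k) (x : 'cV[R]_n)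
  (A : 'M[R]_(k, n)) : Prop :=
  forall e : R, 0 < e -> exists d : R, 0 < d /\
    forall h : 'cV[R]_n, norm2 h < d ->
      norm2 (F (x + h) - F x - A *m h) <= e * norm2 h.

Definition C1 {n k : nat} (F : 'cV[R]_n -> 'cV[R]_k) : Prop :=
  exists D : 'cV[R]_n -> 'M[R]_(k, n),
    (forall z, fderiv F z (D z)) /\ continuous D.

Definition C1_2 {l m : nat} (f : 'cV[R]_l -> 'cV[R]_m -> 'cV[R]_l) : Prop :=
  C1 (fun z : 'cV[R]_(l + m) => f (usubmx z) (dsubmx z)).

Definition spectral_radius {n : nat} (A : 'M[R]_n) : R :=
  sup [set Normc.normc mu | mu in
        [set mu : R[i] | eigenvalue (map_mx (fun a : R => (a%:C)%C) A) mu]].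

Definition parameter_shift {m : nat} (Lam : R -> 'cV[R]_m)
  (lamm lamp : 'cV[R]_m) : Prop :=
  (forall s, derivable Lam s 1) /\ continuous (derive1 Lam) /\
  Lam s @[s --> -oo] --> lamm /\ Lam s @[s --> +oo] --> lamp /\
  derive1 Lam s @[s --> -oo] --> (0 : 'cV[R]_m) /\
  derive1 Lam s @[s --> +oo] --> (0 : 'cV[R]_m).

(* Stable path; Dxf is the partial derivative of f with respect to x *)
Definition stable_path {l m : nat} (f : 'cV[R]_l -> 'cV[R]_m -> 'cV[R]_l)
  (Dxf : 'cV[R]_l -> 'cV[R]_m -> 'M[R]_l)
  (Lam : R -> 'cV[R]_m) (lamm lamp : 'cV[R]_m) (X : R -> 'cV[R]_l) : Prop :=
  (forall s, f (X s) (Lam s) = X s) /\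
  connected [set p : R * 'cV[R]_l | p.2 = X p.1] /\
  (exists Xm Xp : 'cV[R]_l,
     X s @[s --> -oo] --> Xm /\ X s @[s --> +oo] --> Xp /\
     f Xm lamm = Xm /\ f Xp lamp = Xp /\
     (forall s, spectral_radius (Dxf (X s) (Lam s)) < 1) /\
     spectral_radius (Dxf Xm lamm) < 1 /\
     spectral_radius (Dxf Xp lamp) < 1).

Definition Fr {l m : nat} (f : 'cV[R]_l -> 'cV[R]_m -> 'cV[R]_l)
  (Lam : R -> 'cV[R]_m) (r : R) (p : R * 'cV[R]_l) : R * 'cV[R]_l :=
  (p.1 + r, f p.2 (Lam p.1)).

End Defs.

(* Main.v *)
Require Import Defs.
From HB Require Import structures.
From mathcomp Require Import all_boot all_order all_algebra.
From mathcomp Require Import all_classical all_reals all_analysis.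
From mathcomp Require Import complex.
From mathcomp Require Import ring lra.
Set Implicit Arguments. Unset Strict Implicit. Unset Printing Implicit Defensive.
Import Order.TTheory GRing.Theory Num.Theory.
Import numFieldNormedType.Exports.
Local Open Scope classical_set_scope.
Local Open Scope ring_scope.

Section N2.
Variable R : realType.

Lemma sqrt_le_of (a x : R) : 0 <= x -> a <= x ^+ 2 -> Num.sqrt a <= x.
Proof. move=> x0 ax; rewrite -(ger0_norm x0) -sqrtr_sqr ler_sqrt //; exact: exprn_ge0. Qed.

Lemma le_sqrt_of (a x : R) : 0 <= x -> x ^+ 2 <= a -> x <= Num.sqrt a.
Proof. move=> x0 ax; rewrite -(ger0_norm x0) -sqrtr_sqr ler_sqrt //; exact: le_trans (exprn_ge0 _ x0) ax. Qed.

Lemma sumsq_ge0 n (v : 'cV[R]_n) : 0 <= \sum_(i < n) (v i 0) ^+ 2.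
Proof. by apply: sumr_ge0 => i _; rewrite sqr_ge0. Qed.

Lemma norm2_ge0 n (v : 'cV[R]_n) : 0 <= norm2 v.
Proof. exact: sqrtr_ge0. Qed.

Lemma norm2_sq n (v : 'cV[R]_n) : norm2 v ^+ 2 = \sum_(i < n) (v i 0) ^+ 2.
Proof. by rewrite /norm2 sqr_sqrtr // sumsq_ge0. Qed.

Lemma norm2_coord n (v : 'cV[R]_n) i : `|v i 0| <= norm2 v.
Proof.
apply: le_sqrt_of => //; rewrite real_normK ?num_real //.
rewrite (bigD1 i) //= lerDl; apply: sumr_ge0 => j _; exact: sqr_ge0.
Qed.

Lemma norm2_0 n : norm2 (0 : 'cV[R]_n) = 0.
Proof. by rewrite /norm2 big1 ?sqrtr0 // => i _; rewrite mxE expr0n. Qed.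

Lemma norm2_eq0 n (v : 'cV[R]_n) : norm2 v = 0 -> v = 0.
Proof.
move=> h; apply/matrixP => i j; rewrite (ord1 j) mxE.
by have := norm2_coord v i; rewrite h normr_le0 => /eqP.
Qed.

Lemma dot_le n (u v : 'cV[R]_n) :
  \sum_(i < n) u i 0 * v i 0 <= norm2 u * norm2 v.
Proof.
set A := norm2 u; set B := norm2 v.
have A0 : 0 <= A by exact: norm2_ge0.
have B0 : 0 <= B by exact: norm2_ge0.
have [Az|Ap] := eqVneq A 0.
  rewrite Az mul0r big1 // => i _.
  have := norm2_coord u i; rewrite -/A Az => h.
  have : u i 0 = 0 by apply/eqP; rewrite -normr_eq0 eq_le h normr_ge0.
  by move->; rewrite mul0r.
have [Bz|Bp] := eqVneq B 0.
  rewrite Bz mulr0 big1 // => i _.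
  have := norm2_coord v i; rewrite -/B Bz => h.
  have : v i 0 = 0 by apply/eqP; rewrite -normr_eq0 eq_le h normr_ge0.
  by move->; rewrite mulr0.
have AB : 0 < A * B by rewrite mulr_gt0 // lt0r ?Ap ?Bp.
have key : (A * B) *+ 2 * (\sum_(i < n) u i 0 * v i 0)
   <= B ^+ 2 * \sum_(i < n) (u i 0) ^+ 2 + A ^+ 2 * \sum_(i < n) (v i 0) ^+ 2.
  rewrite !mulr_sumr -big_split /=; apply: ler_sum => i _.
  have := sqr_ge0 (B * u i 0 - A * v i 0); nra.
move: key; rewrite -!norm2_sq -/A -/B => key.
have : (A * B) *+ 2 * (\sum_(i < n) u i 0 * v i 0) <= (A * B) *+ 2 * (A * B) by nra.
by rewrite ler_pM2l // mulrn_wgt0.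
Qed.

Lemma norm2D n (u v : 'cV[R]_n) : norm2 (u + v) <= norm2 u + norm2 v.
Proof.
apply: sqrt_le_of; first by rewrite addr_ge0 // norm2_ge0.
have e : \sum_(i < n) ((u + v) i 0) ^+ 2 = \sum_(i < n) (u i 0) ^+ 2 +
   \sum_(i < n) (v i 0) ^+ 2 + 2 * \sum_(i < n) u i 0 * v i 0.
  rewrite mulr_sumr -!big_split /=; apply: eq_bigr => i _; rewrite mxE; ring.
rewrite e -!norm2_sq; have := dot_le u v; nra.
Qed.

Lemma norm2Z n (a : R) (v : 'cV[R]_n) : norm2 (a *: v) = `|a| * norm2 v.
Proof.
rewrite /norm2 -sqrtr_sqr -sqrtrM ?sqr_ge0 // mulr_sumr; congr Num.sqrt.
by apply: eq_bigr => i _; rewrite mxE exprMn.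
Qed.

Lemma norm2N n (v : 'cV[R]_n) : norm2 (- v) = norm2 v.
Proof. by rewrite -scaleN1r norm2Z normrN1 mul1r. Qed.

Lemma norm2B n (u v : 'cV[R]_n) : norm2 (u - v) <= norm2 u + norm2 v.
Proof. by apply: le_trans (norm2D _ _) _; rewrite norm2N. Qed.

Lemma norm2_dist n (u v : 'cV[R]_n) : `|norm2 u - norm2 v| <= norm2 (u - v).
Proof.
rewrite ler_norml; apply/andP; split.
  have := norm2D (v - u) u; rewrite subrK.
  have -> : norm2 (v - u) = norm2 (u - v) by rewrite -norm2N opprB.
  lra.
have := norm2D (u - v) v; rewrite subrK; lra.
Qed.

Lemma norm2_tri n (u v w : 'cV[R]_n) : norm2 (u - w) <= norm2 (u - v) + norm2 (v - w).
Proof. by have := norm2D (u - v) (v - w); rewrite addrA subrK. Qed.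

Lemma sqrt_sum_le n (a : 'I_n -> R) : Num.sqrt (\sum_(i < n) a i ^+ 2) <= \sum_(i < n) `|a i|.
Proof.
elim: n a => [|n IH] a; first by rewrite !big_ord0 sqrtr0.
rewrite !big_ord_recr /=; set S := \sum_(i < n) _; set T := \sum_(i < n) _.
have S0 : 0 <= S by apply: sumr_ge0 => i _; exact: sqr_ge0.
have T0 : 0 <= T by apply: sumr_ge0 => i _; exact: normr_ge0.
have := IH (fun i => a (widen_ord (leqnSn n) i)); rewrite -/S -/T => h.
apply: sqrt_le_of; first by rewrite addr_ge0.
have hs := sqrtr_ge0 S. have hs2 := sqr_sqrtr S0.
have an : a ord_max ^+ 2 = `|a ord_max| ^+ 2 by rewrite real_normK ?num_real.
have := normr_ge0 (a ord_max); nra.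
Qed.

Lemma norm2_le_sum n (v : 'cV[R]_n) : norm2 v <= \sum_(i < n) `|v i 0|.
Proof. exact: sqrt_sum_le. Qed.

Lemma mxnorm_entry k n (A : 'M[R]_(k, n)) i j : `|A i j| <= `|A|.
Proof.
rewrite [leRHS]/Num.norm /= mx_normrE.
by apply/bigmax_geP; right; exists (i, j).
Qed.

Lemma mxnorm_le k n (A : 'M[R]_(k, n)) c : 0 <= c -> (forall i j, `|A i j| <= c) -> `|A| <= c.
Proof.
move=> c0 h; rewrite [leLHS]/Num.norm /= mx_normrE.
by apply/bigmax_leP; split => // ij _; exact: h.
Qed.

Lemma mxnorm_le_norm2 n (v : 'cV[R]_n) : `|v| <= norm2 v.
Proof. by apply: mxnorm_le; [exact: norm2_ge0| move=> i j; rewrite (ord1 j); exact: norm2_coord]. Qed.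

Lemma norm2_le_mxnorm n (v : 'cV[R]_n) : norm2 v <= n%:R * `|v|.
Proof.
apply: le_trans (norm2_le_sum v) _.
have -> : n%:R * `|v| = \sum_(i < n) `|v| by rewrite sumr_const card_ord mulr_natl.
by apply: ler_sum => i _; exact: mxnorm_entry.
Qed.

Lemma norm2_col_mx l m (u : 'cV[R]_l) (w : 'cV[R]_m) :
  norm2 (col_mx u w) ^+ 2 = norm2 u ^+ 2 + norm2 w ^+ 2.
Proof.
rewrite !norm2_sq big_split_ord /=; congr (_ + _); apply: eq_bigr => i _.
  by rewrite col_mxEu. by rewrite col_mxEd.
Qed.

Lemma norm2_col_mx_le l m (u : 'cV[R]_l) (w : 'cV[R]_m) :
  norm2 (col_mx u w) <= norm2 u + norm2 w.
Proof.
apply: sqrt_le_of; first by rewrite addr_ge0 ?norm2_ge0.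
rewrite -norm2_sq norm2_col_mx; have := norm2_ge0 u; have := norm2_ge0 w; nra.
Qed.

Lemma norm2_col_mx0 l m (u : 'cV[R]_l) : norm2 (col_mx u (0 : 'cV[R]_m)) = norm2 u.
Proof.
have h := norm2_col_mx u (0 : 'cV[R]_m); rewrite norm2_0 expr0n addr0 in h.
by apply/eqP; rewrite -(eqrXn2 (n:=2)) ?norm2_ge0 // h.
Qed.

Lemma norm2_usub l m (z : 'cV[R]_(l + m)) : norm2 (usubmx z) <= norm2 z.
Proof.
rewrite -{2}(vsubmxK z); apply: le_sqrt_of; first exact: norm2_ge0.
rewrite -norm2_sq norm2_col_mx lerDl; exact: sqr_ge0.
Qed.

Lemma norm2_dsub l m (z : 'cV[R]_(l + m)) : norm2 (dsubmx z) <= norm2 z.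
Proof.
rewrite -{2}(vsubmxK z); apply: le_sqrt_of; first exact: norm2_ge0.
rewrite -norm2_sq norm2_col_mx lerDr; exact: sqr_ge0.
Qed.

End N2.

Section OP.
Variable R : realType.

Lemma mulmx_coord_le k n (A : 'M[R]_(k, n)) (v : 'cV[R]_n) i :
  `|(A *m v) i 0| <= n%:R * `|A| * norm2 v.
Proof.
rewrite mxE; apply: le_trans (ler_norm_sum _ _ _) _.
have -> : n%:R * `|A| * norm2 v = \sum_(j < n) `|A| * norm2 v.
  by rewrite sumr_const card_ord -mulrA mulr_natl.
apply: ler_sum => j _; rewrite normrM; apply: ler_pM => //.
  exact: mxnorm_entry. exact: norm2_coord.
Qed.

Lemma mulmx_norm2_le k n (A : 'M[R]_(k, n)) (v : 'cV[R]_n) :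
  norm2 (A *m v) <= (k * n)%:R * `|A| * norm2 v.
Proof.
apply: le_trans (norm2_le_sum _) _.
have -> : (k * n)%:R * `|A| * norm2 v = \sum_(i < k) (n%:R * `|A| * norm2 v).
  by rewrite sumr_const card_ord natrM -!mulrA mulr_natl.
apply: ler_sum => i _; exact: mulmx_coord_le.
Qed.

Definition opset k n (A : 'M[R]_(k, n)) :=
  [set norm2 (A *m v) | v in [set v : 'cV[R]_n | norm2 v <= 1]].

Lemma opnormE k n (A : 'M[R]_(k, n)) : opnorm A = sup (opset A).
Proof. by []. Qed.

Lemma opset0 k n (A : 'M[R]_(k, n)) : opset A 0.
Proof. by exists 0; rewrite /= ?norm2_0 ?mulmx0 ?norm2_0. Qed.

Lemma opset_ub k n (A : 'M[R]_(k, n)) : ubound (opset A) ((k * n)%:R * `|A|).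
Proof.
move=> x [v /= v1 <-]; apply: le_trans (mulmx_norm2_le _ _) _.
rewrite -[leRHS]mulr1; apply: ler_pM => //; rewrite ?norm2_ge0 ?mulr_ge0 //.
Qed.

Lemma opset_has_ub k n (A : 'M[R]_(k, n)) : has_ubound (opset A).
Proof. by exists ((k * n)%:R * `|A|); exact: opset_ub. Qed.

Lemma opnorm_ge0 k n (A : 'M[R]_(k, n)) : 0 <= opnorm A.
Proof. by rewrite opnormE; apply: (ub_le_sup (opset_has_ub A)); exact: opset0. Qed.

Lemma opnorm_le_mx k n (A : 'M[R]_(k, n)) : opnorm A <= (k * n)%:R * `|A|.
Proof. by apply: ge_sup; [exists 0; exact: opset0| exact: opset_ub]. Qed.

Lemma opnorm_ub k n (A : 'M[R]_(k, n)) c : 0 <= c ->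
  (forall v, norm2 (A *m v) <= c * norm2 v) -> opnorm A <= c.
Proof.
move=> c0 h; apply: ge_sup; first by exists 0; exact: opset0.
move=> x [v /= v1 <-]; apply: le_trans (h v) _.
by rewrite -[leRHS]mulr1; apply: ler_wpM2l.
Qed.

Lemma opnorm_mul k n (A : 'M[R]_(k, n)) v : norm2 (A *m v) <= opnorm A * norm2 v.
Proof.
have [v0|vn] := eqVneq (norm2 v) 0.
  by rewrite (norm2_eq0 v0) mulmx0 !norm2_0 mulr0.
have vp : 0 < norm2 v by rewrite lt0r vn norm2_ge0.
set w := (norm2 v)^-1 *: v.
have w1 : norm2 w <= 1.
  by rewrite /w norm2Z ger0_norm ?invr_ge0 ?norm2_ge0 // mulVf.
have : norm2 (A *m w) <= opnorm A.
  by rewrite opnormE; apply: (ub_le_sup (opset_has_ub A)); exists w.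
rewrite /w -scalemxAr norm2Z ger0_norm ?invr_ge0 ?norm2_ge0 //.
by rewrite ler_pdivrMl // mulrC.
Qed.

Lemma opnormD k n (A B : 'M[R]_(k, n)) : opnorm (A + B) <= opnorm A + opnorm B.
Proof.
apply: opnorm_ub; first by rewrite addr_ge0 ?opnorm_ge0.
move=> v; rewrite mulmxDl; apply: le_trans (norm2D _ _) _.
by rewrite mulrDl lerD ?opnorm_mul.
Qed.



Lemma opnormM k n p (A : 'M[R]_(k, n)) (B : 'M[R]_(n, p)) :
  opnorm (A *m B) <= opnorm A * opnorm B.
Proof.
apply: opnorm_ub; first by rewrite mulr_ge0 ?opnorm_ge0.
move=> v; rewrite -mulmxA; apply: le_trans (opnorm_mul _ _) _.
rewrite -mulrA; apply: ler_wpM2l; first exact: opnorm_ge0.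
exact: opnorm_mul.
Qed.

Lemma opnormN k n (A : 'M[R]_(k, n)) : opnorm (- A) = opnorm A.
Proof.
have h : forall B : 'M[R]_(k, n), opnorm (- B) <= opnorm B.
  move=> B; apply: opnorm_ub; first exact: opnorm_ge0.
  by move=> v; rewrite mulNmx norm2N opnorm_mul.
by apply/eqP; rewrite eq_le h /= -{1}(opprK A) h.
Qed.

Lemma opnormB k n (A B : 'M[R]_(k, n)) : opnorm (A - B) = opnorm (B - A).
Proof. by rewrite -opnormN opprB. Qed.

Lemma opnorm_tri k n (A B C : 'M[R]_(k, n)) : opnorm (A - C) <= opnorm (A - B) + opnorm (B - C).
Proof. by have := opnormD (A - B) (B - C); rewrite addrA subrK. Qed.

Lemma opnorm1 n : opnorm (1%:M : 'M[R]_n) <= 1.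
Proof. by apply: opnorm_ub => // v; rewrite mul1mx mul1r. Qed.

Lemma opnorm_col10 l m : opnorm (col_mx 1%:M 0 : 'M[R]_(l + m, l)) <= 1.
Proof. by apply: opnorm_ub => // v; rewrite mul_col_mx mul1mx mul0mx norm2_col_mx0 mul1r. Qed.

Lemma opnormX n (A : 'M[R]_n) j : opnorm (A ^+ j) <= opnorm A ^+ j.
Proof.
elim: j => [|j IH]; first by rewrite expr0 expr0 opnorm1.
rewrite exprS exprS; apply: le_trans (opnormM _ _) _.
by apply: ler_wpM2l; [exact: opnorm_ge0|].
Qed.

End OP.

Section FD.
Variable R : realType.

Lemma minle_l (a b : R) : Num.min a b <= a. Proof. by rewrite ge_min lexx. Qed.
Lemma minle_r (a b : R) : Num.min a b <= b. Proof. by rewrite ge_min lexx orbT. Qed.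

Lemma subsubK (V : zmodType) (X p q : V) : (X - q) - (X - p) = p - q.
Proof. by rewrite opprB addrC addrA subrK. Qed.

Lemma le0_of_small (a : R) : (forall e, 0 < e -> a <= e) -> a <= 0.
Proof. by move=> h; apply/ler_addgt0Pr => e e0; rewrite add0r h. Qed.

Lemma mx_eq0_of_mul k n (C : 'M[R]_(k, n)) : (forall v : 'cV[R]_n, C *m v = 0) -> C = 0.
Proof.
move=> h; apply/matrixP => i j.
have := congr1 (fun M : 'cV[R]_k => M i ord0) (h (@delta_mx R n 1 j ord0)).
rewrite !mxE (bigD1 j) //= big1 ?addr0.
  by rewrite !mxE !eqxx mulr1.
by move=> j' /negPf hj; rewrite !mxE hj mulr0.
Qed.

Lemma fderiv_unique n k (F : 'cV[R]_n -> 'cV[R]_k) x A B :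
  fderiv F x A -> fderiv F x B -> A = B.
Proof.
move=> hA hB; apply/eqP; rewrite -subr_eq0; apply/eqP.
have op0 : opnorm (A - B) <= 0.
  apply: le0_of_small => e e0.
  have [d1 [d10 h1]] := hA (e / 2) (divr_gt0 e0 (ltr0Sn _ 1)).
  have [d2 [d20 h2]] := hB (e / 2) (divr_gt0 e0 (ltr0Sn _ 1)).
  set d := Num.min d1 d2.
  have d0 : 0 < d by rewrite lt_min d10 d20.
  apply: opnorm_ub; first exact: ltW.
  move=> v; have [v0|vn] := eqVneq (norm2 v) 0.
    by rewrite (norm2_eq0 v0) mulmx0 !norm2_0 mulr0.
  have vp : 0 < norm2 v by rewrite lt0r vn norm2_ge0.
  set t := d / (2 * norm2 v).
  have t0 : 0 < t by rewrite divr_gt0 // mulr_gt0.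
  have nh : norm2 (t *: v) = d / 2.
    rewrite norm2Z gtr0_norm // /t; field; by rewrite gt_eqF.
  have hd : norm2 (t *: v) < d by rewrite nh ltr_pdivrMr // ltr_pMr // ltr1n.
  have a1 := h1 _ (lt_le_trans hd (minle_l _ _)).
  have a2 := h2 _ (lt_le_trans hd (minle_r _ _)).
  have : norm2 ((A - B) *m (t *: v)) <= e * norm2 (t *: v).
    have -> : (A - B) *m (t *: v) = (F (x + t *: v) - F x - B *m (t *: v))
       - (F (x + t *: v) - F x - A *m (t *: v)) by rewrite mulmxBl subsubK.
    apply: le_trans (norm2B _ _) _; lra.
  by rewrite -scalemxAr !norm2Z gtr0_norm // mulrCA ler_pM2l.
apply: mx_eq0_of_mul => v; apply: norm2_eq0; apply/eqP; rewrite eq_le norm2_ge0 andbT.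
apply: le_trans (opnorm_mul _ _) _.
have -> : opnorm (A - B) = 0 by apply/eqP; rewrite eq_le op0 opnorm_ge0.
by rewrite mul0r.
Qed.


Lemma fderiv_lip n k (F : 'cV[R]_n -> 'cV[R]_k) x A : fderiv F x A ->
  exists d, 0 < d /\ forall h, norm2 h < d -> norm2 (F (x + h) - F x) <= (opnorm A + 1) * norm2 h.
Proof.
move=> hF; have [d [d0 hd]] := hF 1 ltr01; exists d; split => // h hh.
have -> : F (x + h) - F x = (F (x + h) - F x - A *m h) + A *m h by rewrite subrK.
apply: le_trans (norm2D _ _) _; rewrite mulrDl mul1r addrC.
by apply: lerD; [exact: opnorm_mul| have := hd h hh; rewrite mul1r].
Qed.

Lemma addsubK (V : zmodType) (X p q : V) : (X - p) + (p - q) = X - q.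
Proof. by rewrite addrA subrK. Qed.

Lemma fderiv_comp n k p (g : 'cV[R]_n -> 'cV[R]_k) (h : 'cV[R]_k -> 'cV[R]_p) x A B :
  fderiv g x A -> fderiv h (g x) B -> fderiv (fun y => h (g y)) x (B *m A).
Proof.
move=> hg hh e e0.
set a := opnorm A; set b := opnorm B.
have a0 : 0 <= a by exact: opnorm_ge0.
have b0 : 0 <= b by exact: opnorm_ge0.
set e1 := Num.min 1 (e / (2 * (b + 1))).
have e10 : 0 < e1 by rewrite lt_min ltr01 divr_gt0 // mulr_gt0 // ltr_wpDl.
have [d1 [d10 hd1]] := hg e1 e10.
set e2 := e / (2 * (a + 1)).
have e20 : 0 < e2 by rewrite divr_gt0 // mulr_gt0 // ltr_wpDl.
have [d2 [d20 hd2]] := hh e2 e20.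
have a10 : 0 < a + 1 by rewrite ltr_wpDl.
exists (Num.min d1 (d2 / (a + 1))); split; first by rewrite lt_min d10 divr_gt0.
move=> v hv.
have hv1 : norm2 v < d1 := lt_le_trans hv (minle_l _ _).
have hv2 : norm2 v < d2 / (a + 1) := lt_le_trans hv (minle_r _ _).
have r1 := hd1 v hv1.
set u := g (x + v) - g x.
have {}r1 : norm2 (u - A *m v) <= e1 * norm2 v := r1.
have nv0 := norm2_ge0 v.
have hu : norm2 u <= (a + 1) * norm2 v.
  have -> : u = (u - A *m v) + A *m v by rewrite subrK.
  apply: le_trans (norm2D _ _) _; rewrite addrC mulrDl.
  apply: lerD; first exact: opnorm_mul.
  apply: le_trans r1 _; apply: ler_wpM2r => //; exact: minle_l.
have hu2 : norm2 u < d2.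
  apply: le_lt_trans hu _; by rewrite mulrC -ltr_pdivlMr.
have gxu : g (x + v) = g x + u by rewrite /u addrCA subrr addr0.
rewrite gxu; clearbody u.
have -> : h (g x + u) - h (g x) - B *m A *m v =
  (h (g x + u) - h (g x) - B *m u) + B *m (u - A *m v).
  by rewrite mulmxBr -mulmxA addrA subrK.
apply: le_trans (norm2D _ _) _.
have t1 : norm2 (h (g x + u) - h (g x) - B *m u) <= e / 2 * norm2 v.
  apply: le_trans (hd2 u hu2) _.
  have q : e2 * (a + 1) = e / 2 by rewrite /e2; field; rewrite gt_eqF.
  have := ler_wpM2l (ltW e20) hu; rewrite mulrA q //.
have be : b * e1 <= e / 2.
  set w := e / (2 * (b + 1)).
  have w0 : 0 < w by rewrite divr_gt0 // mulr_gt0 // ltr_wpDl.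
  have q : w * (b + 1) = e / 2 by rewrite /w; field; rewrite gt_eqF // ltr_wpDl.
  have := minle_r 1 w; rewrite -/e1 => ew.
  have := ler_wpM2l b0 ew; nra.
have t2 : norm2 (B *m (u - A *m v)) <= e / 2 * norm2 v.
  apply: le_trans (opnorm_mul _ _) _.
  apply: le_trans (ler_wpM2l b0 r1) _.
  by rewrite mulrA ler_wpM2r.
have -> : e * norm2 v = e / 2 * norm2 v + e / 2 * norm2 v by field.
exact: lerD.
Qed.

Lemma fderiv_lin n k (F : 'cV[R]_n -> 'cV[R]_k) x A :
  (forall h, F (x + h) - F x = A *m h) -> fderiv F x A.
Proof.
move=> hF e e0; exists 1; split => // h _.
by rewrite hF subrr norm2_0; apply: mulr_ge0; [exact: ltW | exact: norm2_ge0].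
Qed.

Lemma fderiv_id n (x : 'cV[R]_n) : fderiv (fun y => y) x 1%:M.
Proof. by apply: fderiv_lin => h; rewrite mul1mx addrC addKr. Qed.

Lemma fderiv_colmx l m (c : 'cV[R]_m) (x : 'cV[R]_l) :
  fderiv (fun y => col_mx y c) x (col_mx 1%:M 0).
Proof.
apply: fderiv_lin => h; rewrite mul_col_mx mul1mx mul0mx.
by rewrite opp_col_mx add_col_mx subrr addrC addKr.
Qed.

End FD.

Lemma cont_eps (R : realType) (V W : normedModType R) (g : V -> W) (x : V) :
  {for x, continuous g} -> forall e, 0 < e -> exists2 d, 0 < d &
    forall y, `|x - y| < d -> `|g x - g y| < e.
Proof.
move=> /cvgr_dist_lt h e e0; have := h e e0; move/nbhs_normP => [d d0 hd].
by exists d => // y hy; exact: (hd y hy).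
Qed.

Section Model.
Variable R : realType.
Variables l m : nat.
Variable f : 'cV[R]_l -> 'cV[R]_m -> 'cV[R]_l.
Variable Dxf : 'cV[R]_l -> 'cV[R]_m -> 'M[R]_l.
Hypothesis hDx : forall x lam, fderiv (fun y => f y lam) x (Dxf x lam).
Variable D : 'cV[R]_(l + m) -> 'M[R]_(l, l + m).
Hypothesis hD : forall z, fderiv (fun z : 'cV[R]_(l + m) => f (usubmx z) (dsubmx z)) z (D z).
Hypothesis hDc : continuous D.

Lemma norm2C n (u v : 'cV[R]_n) : norm2 (u - v) = norm2 (v - u).
Proof. by rewrite -norm2N opprB. Qed.

Lemma col_mxB (x x0 : 'cV[R]_l) (a a0 : 'cV[R]_m) :
  col_mx x a - col_mx x0 a0 = col_mx (x - x0) (a - a0).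
Proof. by rewrite opp_col_mx add_col_mx. Qed.

Lemma Dxf_eq x lam : Dxf x lam = D (col_mx x lam) *m col_mx 1%:M 0.
Proof.
apply: (fderiv_unique (hDx x lam)).
have := fderiv_comp (fderiv_colmx lam x) (hD (col_mx x lam)).
suff -> : (fun y => f (usubmx (col_mx y lam)) (dsubmx (col_mx y lam))) = (fun y => f y lam) by [].
by apply: funext => y; rewrite col_mxKu col_mxKd.
Qed.

Lemma Dxf_cont x0 a0 e : 0 < e -> exists2 eta, 0 < eta &
  forall x a, norm2 (x - x0) <= eta -> norm2 (a - a0) <= eta ->
    opnorm (Dxf x a - Dxf x0 a0) <= e.
Proof.
move=> e0; set K := (l * (l + m))%:R + 1 : R.
have K0 : 0 < K by rewrite ltr_wpDl.
have [d d0 hd] := cont_eps (@hDc (col_mx x0 a0)) (divr_gt0 e0 K0).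
exists (d / 3); first by rewrite divr_gt0.
move=> x a hx ha; rewrite !Dxf_eq -mulmxBl.
apply: le_trans (opnormM _ _) _.
have hc := opnorm_col10 R l m.
have o0 := opnorm_ge0 (D (col_mx x a) - D (col_mx x0 a0)).
suff : opnorm (D (col_mx x a) - D (col_mx x0 a0)) <= e by nra.
apply: le_trans (opnorm_le_mx _) _.
have : `|D (col_mx x0 a0) - D (col_mx x a)| < e / K.
  apply: hd; apply: le_lt_trans (mxnorm_le_norm2 _) _.
  rewrite col_mxB; apply: le_lt_trans (norm2_col_mx_le _ _) _.
  rewrite norm2C (norm2C a0).
  lra.
rewrite -normrN opprB => h.
have h2 : (l * (l + m))%:R * `|D (col_mx x a) - D (col_mx x0 a0)| <= K * (e / K).
  apply: ler_pM; [exact: ler0n | exact: normr_ge0 | by rewrite /K lerDl | exact: ltW].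
by apply: le_trans h2 _; rewrite mulrC divfK ?gt_eqF.
Qed.

Lemma f_lip x0 a0 : exists2 d, 0 < d & exists2 C, 0 <= C &
  forall x a, norm2 (x - x0) <= d -> norm2 (a - a0) <= d ->
    norm2 (f x a - f x0 a0) <= C * (norm2 (x - x0) + norm2 (a - a0)).
Proof.
have [d [d0 hd]] := fderiv_lip (hD (col_mx x0 a0)).
exists (d / 3); first by rewrite divr_gt0.
exists (opnorm (D (col_mx x0 a0)) + 1); first by rewrite addr_ge0 ?opnorm_ge0.
move=> x a hx ha.
have hh : norm2 (col_mx x a - col_mx x0 a0) < d.
  rewrite col_mxB; apply: le_lt_trans (norm2_col_mx_le _ _) _.
  lra.
have := hd _ hh; rewrite addrCA subrr addr0 !col_mxKu !col_mxKd => h.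
apply: le_trans h _; apply: ler_wpM2l; first by rewrite addr_ge0 ?opnorm_ge0.
by rewrite col_mxB; exact: norm2_col_mx_le.
Qed.

Lemma f_cont x0 a0 e : 0 < e -> exists2 eta, 0 < eta &
  forall x a, norm2 (x - x0) <= eta -> norm2 (a - a0) <= eta ->
    norm2 (f x a - f x0 a0) <= e.
Proof.
move=> e0; have [d d0 [C C0 h]] := f_lip x0 a0.
exists (Num.min d (e / (2 * (C + 1)))).
  by rewrite lt_min d0 divr_gt0 // mulr_gt0 // ltr_wpDl.
move=> x a hx ha.
have hx1 := le_trans hx (minle_l _ _). have ha1 := le_trans ha (minle_l _ _).
apply: le_trans (h x a hx1 ha1) _.
have hx2 := le_trans hx (minle_r _ _). have ha2 := le_trans ha (minle_r _ _).
set w := e / (2 * (C + 1)) in hx2 ha2.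
have w0 : 0 < w by rewrite divr_gt0 // mulr_gt0 // ltr_wpDl.
have q : w * (2 * (C + 1)) = e by rewrite /w divfK // gt_eqF // mulr_gt0 // ltr_wpDl.
have n1 := norm2_ge0 (x - x0). have n2 := norm2_ge0 (a - a0).
nra.
Qed.

End Model.


Section Pert.
Variable R : realType.
Variable l : nat.

Fixpoint prodB (B : nat -> 'M[R]_l) (k : nat) : 'M[R]_l :=
  if k is k'.+1 then B k' *m prodB B k' else 1%:M.

Lemma pert (M : 'M[R]_l) (B : nat -> 'M[R]_l) c d n :
  0 <= c -> 0 <= d -> d <= 1 -> opnorm M <= c ->
  (forall k, (k < n)%N -> opnorm (B k - M) <= d) ->
  opnorm (prodB B n) <= (c + 1) ^+ n /\
  opnorm (prodB B n - M ^+ n) <= n%:R * d * (c + 1) ^+ n.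
Proof.
move=> c0 d0 d1 hM hB; elim: n hB => [|n IH] hB.
  split; first by rewrite /= expr0; exact: opnorm1.
  have -> : M ^+ 0 = 1%:M by rewrite expr0.
  rewrite /= subrr !mul0r; apply: opnorm_ub => // v.
  by rewrite mul0mx norm2_0 mul0r.
have [IH1 IH2] := IH (fun k hk => hB k (ltnW hk)).
have hBn := hB n (ltnSn n).
have c1 : 0 <= (c + 1) ^+ n by rewrite exprn_ge0 // addr_ge0.
have p0 := opnorm_ge0 (prodB B n).
have e0 := opnorm_ge0 (prodB B n - M ^+ n).
have oBn : opnorm (B n) <= c + d.
  have -> : B n = (B n - M) + M by rewrite subrK.
  by apply: le_trans (opnormD _ _) _; rewrite addrC lerD.
split.
  rewrite /= exprS; apply: le_trans (opnormM _ _) _.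
  apply: ler_pM => //; [exact: opnorm_ge0 | lra].
have -> : prodB B n.+1 - M ^+ n.+1 = (B n - M) *m prodB B n + M *m (prodB B n - M ^+ n).
  by rewrite /= exprS mulmxBl mulmxBr mulmxE addrA subrK.
apply: le_trans (opnormD _ _) _.
have t1 : opnorm ((B n - M) *m prodB B n) <= d * (c + 1) ^+ n.
  apply: le_trans (opnormM _ _) _; apply: ler_pM => //; exact: opnorm_ge0.
have t2 : opnorm (M *m (prodB B n - M ^+ n)) <= c * (n%:R * d * (c + 1) ^+ n).
  apply: le_trans (opnormM _ _) _; apply: ler_pM => //; exact: opnorm_ge0.
apply: le_trans (lerD t1 t2) _.
rewrite exprS -natr1.
have nn : 0 <= n%:R :> R by exact: ler0n.
set P := (c + 1) ^+ n in c1 t1 t2 *.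
have dP : 0 <= d * P by rewrite mulr_ge0.
have : 0 <= n%:R * d * P by rewrite !mulr_ge0.
nra.
Qed.

End Pert.

Section Core.
Variable R : realType.
Variables l m : nat.
Variable f : 'cV[R]_l -> 'cV[R]_m -> 'cV[R]_l.
Variable Dxf : 'cV[R]_l -> 'cV[R]_m -> 'M[R]_l.
Variable Lam : R -> 'cV[R]_m.
Variable X : R -> 'cV[R]_l.
Variable N : nat.
Hypothesis hDx : forall x lam, fderiv (fun y => f y lam) x (Dxf x lam).
Hypothesis Dcont : forall x0 a0 e, 0 < e -> exists2 eta, 0 < eta &
  forall x a, norm2 (x - x0) <= eta -> norm2 (a - a0) <= eta ->
    opnorm (Dxf x a - Dxf x0 a0) <= e.
Hypothesis fcont : forall x0 a0 e, 0 < e -> exists2 eta, 0 < eta &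
  forall x a, norm2 (x - x0) <= eta -> norm2 (a - a0) <= eta ->
    norm2 (f x a - f x0 a0) <= e.
Hypothesis hN : forall (s : R) (n : nat), (N <= n)%N ->
     opnorm ((Dxf (X s) (Lam s)) ^+ n) < 1 / 4.

Lemma iter_fst r s y k : (iter k (Fr f Lam r) (s, y)).1 = s + k%:R * r.
Proof.
elim: k => [|k IH]; first by rewrite mul0r addr0.
by rewrite iterS /= IH -natr1 mulrDl mul1r addrA.
Qed.

Lemma iter_snd r s y k : (iter k.+1 (Fr f Lam r) (s, y)).2 =
  f (iter k (Fr f Lam r) (s, y)).2 (Lam (s + k%:R * r)).
Proof. by rewrite iterS /= iter_fst. Qed.

Lemma iter_deriv r s x k : fderiv (fun y => (iter k (Fr f Lam r) (s, y)).2) x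
  (prodB (fun j => Dxf (iter j (Fr f Lam r) (s, x)).2 (Lam (s + j%:R * r))) k).
Proof.
elim: k => [|k IH]; first exact: fderiv_id.
have -> : (fun y => (iter k.+1 (Fr f Lam r) (s, y)).2) =
   (fun y => f (iter k (Fr f Lam r) (s, y)).2 (Lam (s + k%:R * r))).
  by apply: funext => y; rewrite iter_snd.
exact: (fderiv_comp IH (hDx _ _)).
Qed.

Lemma track x0 a0 : f x0 a0 = x0 -> forall K th, 0 < th ->
  exists2 tau, 0 < tau & tau <= th /\
  forall (xs : nat -> 'cV[R]_l) (az : nat -> 'cV[R]_m),
    norm2 (xs 0%N - x0) <= tau -> (forall k, (k < K)%N -> norm2 (az k - a0) <= tau) ->
    (forall k, (k < K)%N -> xs k.+1 = f (xs k) (az k)) ->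
    forall k, (k <= K)%N -> norm2 (xs k - x0) <= th.
Proof.
move=> fx K; elim: K => [|K IH] th th0.
  exists th => //; split => // xs az h0 _ _ k; rewrite leqn0 => /eqP ->; exact: h0.
have [et et0 het] := fcont x0 a0 th0.
have th'0 : 0 < Num.min th et by rewrite lt_min th0 et0.
have [tau tau0 [tauth h]] := IH _ th'0.
exists tau => //; split; first exact: le_trans tauth (minle_l _ _).
move=> xs az h0 haz hxs k; rewrite leq_eqVlt => /orP [/eqP ->|hk].
  rewrite hxs // -{1}fx; apply: het.
    exact: le_trans (h xs az h0 (fun k hk => haz k (ltnW hk)) (fun k hk => hxs k (ltnW hk)) K (leqnn K)) (minle_r _ _).
  exact: le_trans (haz K (ltnSn K)) (le_trans tauth (minle_r _ _)).
apply: le_trans (h xs az h0 (fun k hk => haz k (ltnW hk)) (fun k hk => hxs k (ltnW hk)) k hk) (minle_l _ _).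
Qed.

Lemma core x0 a0 : f x0 a0 = x0 -> exists2 eta, 0 < eta &
  forall s r x n, (N <= n <= N * N.+1)%N ->
    norm2 (X s - x0) <= eta -> norm2 (x - X s) <= eta ->
    (forall k, (k <= N * N.+1)%N -> norm2 (Lam (s + k%:R * r) - a0) <= eta) ->
    exists A : 'M[R]_l,
        fderiv (fun y : 'cV[R]_l => (iter n (Fr f Lam r) (s, y)).2) x A /\
        opnorm A < 1 / 2.
Proof.
move=> fx; set n0 := (N * N.+1)%N.
set M0 := Dxf x0 a0; set c := opnorm M0 + 1.
have c0 : 0 <= c by rewrite addr_ge0 ?opnorm_ge0.
have cp : 0 < (c + 1) ^+ n0 by rewrite exprn_gt0 // ltr_wpDl.
set dl := Num.min 1 (1 / (4 * (n0%:R + 1) * (c + 1) ^+ n0)).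
have dl0 : 0 < dl by rewrite lt_min ltr01 divr_gt0 // !mulr_gt0 // ltr_wpDl.
have dl1 : dl <= 1 := minle_l _ _.
have [th th0 hth] := Dcont x0 a0 (divr_gt0 dl0 (ltr0Sn _ 1)).
have [tau tau0 [tauth htr]] := track fx n0 th0.
exists (tau / 2); first by rewrite divr_gt0.
move=> s r x n /andP [Nn nn0] hX hx hL.
set xs := fun k => (iter k (Fr f Lam r) (s, x)).2.
set az := fun k => Lam (s + k%:R * r).
have hxs : forall k, (k <= n0)%N -> norm2 (xs k - x0) <= th.
  apply: htr.
  - rewrite /xs /=; apply: le_trans (norm2_tri _ (X s) _) _.
    by have := norm2_ge0 x; lra.
  - by move=> k hk; apply: le_trans (hL k (ltnW hk)) _; lra.
  - by move=> k hk; rewrite /xs iter_snd.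
set M := Dxf (X s) (Lam s).
have hM : opnorm (M - M0) <= dl / 2.
  apply: hth; first by apply: le_trans hX _; lra.
  have := hL 0%N (leq0n _); rewrite mul0r addr0 => h; lra.
have hB : forall k, (k < n)%N -> opnorm (Dxf (xs k) (az k) - M) <= dl.
  move=> k hk.
  have hk0 : (k <= n0)%N by apply: leq_trans (ltnW hk) nn0.
  apply: le_trans (opnorm_tri _ M0 _) _; rewrite (opnormB M0).
  have : opnorm (Dxf (xs k) (az k) - M0) <= dl / 2.
    apply: hth; first exact: hxs.
    by apply: le_trans (hL k hk0) _; lra.
  lra.
have oM : opnorm M <= c.
  have -> : M = (M - M0) + M0 by rewrite subrK.
  apply: le_trans (opnormD _ _) _; rewrite /c addrC lerD //.
  by apply: le_trans hM _; lra.
have [_ hP] := pert c0 (ltW dl0) (minle_l _ _) oM hB.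
exists (prodB (fun j => Dxf (xs j) (az j)) n); split; first exact: iter_deriv.
have hMn := hN s Nn; rewrite -/M in hMn.
have -> : prodB (fun j => Dxf (xs j) (az j)) n =
   (prodB (fun j => Dxf (xs j) (az j)) n - M ^+ n) + M ^+ n by rewrite subrK.
apply: le_lt_trans (opnormD _ _) _.
suff : n%:R * dl * (c + 1) ^+ n <= 1 / 4 by lra.
have e1 : (c + 1) ^+ n <= (c + 1) ^+ n0 by apply: ler_weXn2l => //; rewrite lerDr.
have e2 : n%:R <= n0%:R :> R by rewrite ler_nat.
have e3 : dl <= 1 / (4 * (n0%:R + 1) * (c + 1) ^+ n0) by exact: minle_r.
have nn : 0 <= n%:R :> R by exact: ler0n.
have p0 : 0 <= (c + 1) ^+ n by rewrite exprn_ge0 // addr_ge0.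
have q : n0%:R * (1 / (4 * (n0%:R + 1) * (c + 1) ^+ n0)) * (c + 1) ^+ n0 <= 1 / 4.
  have n00 : 0 <= n0%:R :> R by exact: ler0n.
  have h4 : 0 < 4 * (n0%:R + 1) :> R by rewrite mulr_gt0 // ltr_wpDl.
  have wP : (1 / (4 * (n0%:R + 1) * (c + 1) ^+ n0)) * (c + 1) ^+ n0 = 1 / (4 * (n0%:R + 1)).
    by rewrite !mul1r invfM mulfVK // gt_eqF.
  rewrite -mulrA wP mul1r ler_pdivrMr //.
  lra.
apply: le_trans q.
apply: ler_pM; [ by rewrite mulr_ge0 // ltW | exact: p0 | | exact: e1].
by apply: ler_pM => //; exact: ltW.
Qed.

End Core.


Section Topo.
Variable R : realType.
Variable l : nat.

Lemma fst_cont : continuous (fun p : R * 'cV[R]_l => p.1).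
Proof. by move=> p; exact: cvg_fst. Qed.

Lemma snd_cont : continuous (fun p : R * 'cV[R]_l => p.2).
Proof. by move=> p; exact: cvg_snd. Qed.

Lemma mx_near (v : 'cV[R]_l) (P : 'cV[R]_l -> Prop) :
  (exists2 d : R, 0 < d & forall w, `|v - w| < d -> P w) -> \forall w \near v, P w.
Proof.
move=> [d d0 h]; apply/nbhs_ballP; exists d => // w; rewrite mx_norm_ball /ball_ /=; exact: h.
Qed.

Lemma norm2_cont (x0 : 'cV[R]_l) : continuous (fun v : 'cV[R]_l => norm2 (v - x0)).
Proof.
move=> v; apply/(cvgrPdist_lt (FF := nbhs_filter v)) => e e0; apply: mx_near.
exists (e / (l%:R + 1)); first by rewrite divr_gt0 // ltr_wpDl.
move=> w /= hw.
apply: le_lt_trans (norm2_dist _ _) _.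
have -> : v - x0 - (w - x0) = v - w by rewrite opprB addrA subrK.
apply: le_lt_trans (norm2_le_mxnorm _) _.
have lp : 0 < l%:R + 1 :> R by rewrite ltr_wpDl.
move: hw; rewrite ltr_pdivlMr // => hw.
have := normr_ge0 (v - w); have : 0 <= l%:R :> R by exact: ler0n.
nra.
Qed.

Lemma pnorm_cont (x0 : 'cV[R]_l) : continuous (fun p : R * 'cV[R]_l => norm2 (p.2 - x0)).
Proof. by move=> p; exact: (continuous_comp (@snd_cont p) (@norm2_cont x0 p.2)). Qed.

End Topo.

Lemma conn_split (T : topologicalType) (G C C' : set T) : connected G -> open C -> closed C' ->
  G `&` C = G `&` C' -> (exists p, G p /\ C p) -> (exists q, G q /\ ~ C q) -> False.
Proof.
move=> cG oC cC' e [p [Gp Cp]] [q [Gq nCq]].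
have := cG (G `&` C) (ex_intro _ p (conj Gp Cp)) (ex_intro2 _ _ C oC erefl)
  (ex_intro2 _ _ C' cC' e).
move=> h; apply: nCq; have : (G `&` C) q by rewrite h.
by case.
Qed.

Section Conn.
Variable R : realType.
Variable l : nat.
Variable X : R -> 'cV[R]_l.
Hypothesis Gconn : connected [set p : R * 'cV[R]_l | p.2 = X p.1].

Let T := (R * 'cV[R]_l)%type.

Lemma o_lt b : open [set p : T | p.1 < b].
Proof. exact: (open_comp (fun p _ => @fst_cont R l p) (@open_lt R b)). Qed.
Lemma o_gt b : open [set p : T | b < p.1].
Proof. exact: (open_comp (fun p _ => @fst_cont R l p) (@open_gt R b)). Qed.
Lemma c_le b : closed [set p : T | p.1 <= b].
Proof. exact: (preimage_closed (fun p _ => @fst_cont R l p) (@closed_le R b)). Qed.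
Lemma c_ge b : closed [set p : T | b <= p.1].
Proof. exact: (preimage_closed (fun p _ => @fst_cont R l p) (@closed_ge R b)). Qed.
Lemma o_nrm x0 r : open [set p : T | norm2 (p.2 - x0) < r].
Proof. exact: (open_comp (fun p _ => @pnorm_cont R l x0 p) (@open_lt R r)). Qed.
Lemma c_nrm x0 r : closed [set p : T | norm2 (p.2 - x0) <= r].
Proof. exact: (preimage_closed (fun p _ => @pnorm_cont R l x0 p) (@closed_le R r)). Qed.

Variables (s0 rho d0 : R).
Hypothesis rho0 : 0 < rho.
Hypothesis hgap : forall t, `|t - s0| < d0 -> norm2 (X t - X s0) <= rho -> norm2 (X t - X s0) < rho.

Let inS t : `|t - s0| < d0 <-> s0 - d0 < t < s0 + d0.
Proof. by rewrite ltr_norml; split => /andP [h1 h2]; apply/andP; split; lra. Qed.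

Lemma bb a b : a < s0 < b -> `|a - s0| < d0 -> `|b - s0| < d0 ->
  rho < norm2 (X a - X s0) -> rho < norm2 (X b - X s0) -> False.
Proof.
move=> /andP [as0 s0b] ha hb na nb.
move: ha hb => /inS /andP [ha1 ha2] /inS /andP [hb1 hb2].
set x0 := X s0.
apply: (conn_split Gconn (C := [set p : T | a < p.1] `&` ([set p : T | p.1 < b] `&` [set p : T | norm2 (p.2 - x0) < rho]))
                         (C' := [set p : T | a <= p.1] `&` ([set p : T | p.1 <= b] `&` [set p : T | norm2 (p.2 - x0) <= rho]))).
- by apply: openI; [exact: o_gt| apply: openI; [exact: o_lt| exact: o_nrm]].
- by apply: closedI; [exact: c_ge| apply: closedI; [exact: c_le| exact: c_nrm]].
- apply/seteqP; split => -[t y] [/= Gp Cp]; split => //.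
    by case: Cp => /= h1 [h2 h3]; split; [exact: ltW| split; exact: ltW].
  case: Cp => /= h1 [h2 h3]; rewrite Gp in h3 *.
  have ta : a < t.
    rewrite lt_neqAle h1 andbT; apply/eqP => e; rewrite -e in h3; rewrite -/x0 in na; lra.
  have tb : t < b.
    rewrite lt_neqAle h2 andbT; apply/eqP => e; rewrite e in h3; rewrite -/x0 in nb; lra.
  split => //; split => //; apply: hgap => //; apply/inS; apply/andP; split; lra.
- exists (s0, x0); split => //=; split => //; split => //; rewrite subrr norm2_0 //.
- exists (b, X b); split => //= -[_ [h _]]; lra.
Qed.


Lemma gb b : s0 < b -> `|b - s0| < d0 -> rho < norm2 (X b - X s0) -> False.
Proof.
move=> s0b hb nb.
have d00 : 0 < d0 by apply: le_lt_trans hb.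
move: (hb) => /inS /andP [hb1 hb2].
set c := s0 - d0 / 2.
have hc : `|c - s0| < d0 by apply/inS; apply/andP; split; rewrite /c; lra.
have [cg|cb] := leP (norm2 (X c - X s0)) rho; last first.
  by apply: (bb (a := c) (b := b)) => //; apply/andP; split => //; rewrite /c; lra.
have cg' := hgap hc cg.
set x0 := X s0.
apply: (conn_split Gconn (C := [set p : T | p.1 < b] `&` ([set p : T | p.1 < c] `|` [set p : T | norm2 (p.2 - x0) < rho]))
                         (C' := [set p : T | p.1 <= b] `&` ([set p : T | p.1 <= c] `|` [set p : T | norm2 (p.2 - x0) <= rho]))).
- by apply: openI; [exact: o_lt| apply: openU; [exact: o_lt| exact: o_nrm]].
- by apply: closedI; [exact: c_le| apply: closedU; [exact: c_le| exact: c_nrm]].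
- apply/seteqP; split => -[t y] [/= Gp Cp]; split => //.
    case: Cp => /= h1 h2; split; first exact: ltW.
    by case: h2 => h2; [left; exact: ltW| right; exact: ltW].
  case: Cp => /= h1 h2; rewrite Gp in h2 *.
  have [tc|ct] := ltP t c.
    by split; [rewrite /c in tc; lra| left].
  have nt : norm2 (X t - x0) <= rho.
    case: h2 => // h2; have -> : t = c by apply/eqP; rewrite eq_le h2 ct.
    exact: cg.
  have ht : `|t - s0| < d0 by apply/inS; apply/andP; split; rewrite /c in ct; lra.
  have tb : t < b.
    rewrite lt_neqAle h1 andbT; apply/eqP => e; rewrite e -/x0 in nt; rewrite -/x0 in nb; lra.
  by split => //; right; exact: hgap.
- exists (s0, x0); split => //=; split; first by [].
  by right; rewrite subrr norm2_0.
- exists (b, X b); split => //= -[h _]; lra.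
Qed.

Lemma bg b : b < s0 -> `|b - s0| < d0 -> rho < norm2 (X b - X s0) -> False.
Proof.
move=> bs0 hb nb.
have d00 : 0 < d0 by apply: le_lt_trans hb.
move: (hb) => /inS /andP [hb1 hb2].
set c := s0 + d0 / 2.
have hc : `|c - s0| < d0 by apply/inS; apply/andP; split; rewrite /c; lra.
have [cg|cb] := leP (norm2 (X c - X s0)) rho; last first.
  by apply: (bb (a := b) (b := c)) => //; apply/andP; split => //; rewrite /c; lra.
have cg' := hgap hc cg.
set x0 := X s0.
apply: (conn_split Gconn (C := [set p : T | b < p.1] `&` ([set p : T | c < p.1] `|` [set p : T | norm2 (p.2 - x0) < rho]))
                         (C' := [set p : T | b <= p.1] `&` ([set p : T | c <= p.1] `|` [set p : T | norm2 (p.2 - x0) <= rho]))).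
- by apply: openI; [exact: o_gt| apply: openU; [exact: o_gt| exact: o_nrm]].
- by apply: closedI; [exact: c_ge| apply: closedU; [exact: c_ge| exact: c_nrm]].
- apply/seteqP; split => -[t y] [/= Gp Cp]; split => //.
    case: Cp => /= h1 h2; split; first exact: ltW.
    by case: h2 => h2; [left; exact: ltW| right; exact: ltW].
  case: Cp => /= h1 h2; rewrite Gp in h2 *.
  have [ct|tc] := ltP c t.
    by split; [rewrite /c in ct; lra| left].
  have nt : norm2 (X t - x0) <= rho.
    case: h2 => // h2; have -> : t = c by apply/eqP; rewrite eq_le h2 tc.
    exact: cg.
  have ht : `|t - s0| < d0 by apply/inS; apply/andP; split; rewrite /c in tc; lra.
  have tb : b < t.
    rewrite lt_neqAle h1 andbT; apply/eqP => e; rewrite -e -/x0 in nt; rewrite -/x0 in nb; lra.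
  by split => //; right; exact: hgap.
- exists (s0, x0); split => //=; split; first by [].
  by right; rewrite subrr norm2_0.
- exists (b, X b); split => //= -[h _]; lra.
Qed.

Lemma conn_bound t : `|t - s0| < d0 -> norm2 (X t - X s0) <= rho.
Proof.
move=> ht; have [//|nb] := leP (norm2 (X t - X s0)) rho.
have [ts|st|e] := ltgtP t s0.
- by case: (bg ts ht nb).
- by case: (gb st ht nb).
- by move: nb; rewrite e subrr norm2_0 ltNge (ltW rho0).
Qed.

End Conn.


Section Gap.
Variable R : realType.
Variables l m : nat.
Variable f : 'cV[R]_l -> 'cV[R]_m -> 'cV[R]_l.
Variable Dxf : 'cV[R]_l -> 'cV[R]_m -> 'M[R]_l.
Hypothesis hDx : forall x lam, fderiv (fun y => f y lam) x (Dxf x lam).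
Variable D : 'cV[R]_(l + m) -> 'M[R]_(l, l + m).
Hypothesis hD : forall z, fderiv (fun z : 'cV[R]_(l + m) => f (usubmx z) (dsubmx z)) z (D z).
Variable N : nat.

Lemma addKsub (V : zmodType) (a s b : V) : a + (s + (b - a)) = b + s.
Proof. by rewrite addrCA (addrC a) subrK addrC. Qed.

Lemma tele (A : 'M[R]_l) (d : 'cV[R]_l) k :
  d = A ^+ k *m d + \sum_(j < k) A ^+ j *m (d - A *m d).
Proof.
elim: k => [|k IH].
  by rewrite big_ord0 addr0 expr0 mul1mx.
have e : A ^+ k *m A = A ^+ k.+1 by rewrite exprSr.
rewrite big_ord_recr /= mulmxBr mulmxA e.
set P := A ^+ k.+1 *m d; set Q := A ^+ k *m d; set S := \sum_(j < k) _.
by rewrite addKsub -IH.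
Qed.


Lemma norm2_sum k (v : 'I_k -> 'cV[R]_l) : norm2 (\sum_(j < k) v j) <= \sum_(j < k) norm2 (v j).
Proof.
elim: k v => [|k IH] v; first by rewrite !big_ord0 norm2_0.
rewrite !big_ord_recr /=; apply: le_trans (norm2D _ _) _; exact: lerD.
Qed.

Lemma gap x0 a0 : f x0 a0 = x0 -> opnorm (Dxf x0 a0 ^+ N) < 1 / 4 ->
  exists2 rho, 0 < rho & exists2 K, 0 <= K &
  forall x a, norm2 (x - x0) <= rho -> norm2 (a - a0) <= rho -> f x a = x ->
    norm2 (x - x0) <= K * norm2 (a - a0).
Proof.
move=> fx hq.
set A := Dxf x0 a0; set D0 := D (col_mx x0 a0).
set Bm := D0 *m (col_mx 0 1%:M : 'M[R]_(l + m, m)).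
have hsplit : forall (d : 'cV[R]_l) (e : 'cV[R]_m), D0 *m col_mx d e = A *m d + Bm *m e.
  move=> d e; rewrite /A (Dxf_eq hDx hD) -/D0 /Bm -!mulmxA -mulmxDr.
  by rewrite !mul_col_mx !mul1mx !mul0mx add_col_mx addr0 add0r.
set S := \sum_(j < N) opnorm (A ^+ j).
have S0 : 0 <= S by apply: sumr_ge0 => j _; exact: opnorm_ge0.
set b := opnorm Bm.
have b0 : 0 <= b by exact: opnorm_ge0.
set eps := 1 / (4 * (S + 1)).
have S10 : 0 < 4 * (S + 1) by rewrite mulr_gt0 // ltr_wpDl.
have eps0 : 0 < eps by rewrite divr_gt0.
have Se : S * eps <= 1 / 4.
  rewrite /eps mul1r ler_pdivrMr //; lra.
have [dd [dd0 hdd]] := hD (col_mx x0 a0) eps0.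
exists (dd / 3); first by rewrite divr_gt0.
exists (1 / 2 + 2 * S * b); first by rewrite addr_ge0 // mulr_ge0 // mulr_ge0.
move=> x a hx ha fxa.
set d := x - x0; set e := a - a0.
have nd := norm2_ge0 d; have ne := norm2_ge0 e.
have hh : norm2 (col_mx d e) < dd.
  apply: le_lt_trans (norm2_col_mx_le _ _) _; lra.
have := hdd _ hh.
rewrite -col_mxB // addrCA subrr addr0 !col_mxKu !col_mxKd fxa fx col_mxB -/D0 hsplit => hr.
set r := x - x0 - (A *m d + Bm *m e) in hr.
have hr2 : norm2 r <= eps * (norm2 d + norm2 e).
  apply: le_trans hr _; apply: ler_wpM2l; [exact: ltW| exact: norm2_col_mx_le].
have hw : norm2 (d - A *m d) <= norm2 r + b * norm2 e.
  have -> : d - A *m d = r + Bm *m e.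
    by rewrite /r /d opprD addrA subrK.
  by apply: le_trans (norm2D _ _) _; rewrite lerD // opnorm_mul.
have ht : norm2 d <= opnorm (A ^+ N) * norm2 d + S * norm2 (d - A *m d).
  rewrite {1}(tele A d N); apply: le_trans (norm2D _ _) _.
  apply: lerD; first exact: opnorm_mul.
  apply: le_trans (norm2_sum _) _; rewrite /S mulr_suml.
  by apply: ler_sum => j _; exact: opnorm_mul.
set q := opnorm (A ^+ N) in ht hq.
have q0 : 0 <= q by exact: opnorm_ge0.
have w0 := norm2_ge0 (d - A *m d).
have t1 : q * norm2 d <= 1 / 4 * norm2 d by apply: ler_wpM2r => //; exact: ltW.
have t2 : S * norm2 (d - A *m d) <= S * (eps * (norm2 d + norm2 e)) + S * (b * norm2 e).
  by rewrite -mulrDr; apply: ler_wpM2l => //; exact: le_trans hw (lerD hr2 (lexx _)).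
have t3 : S * (eps * (norm2 d + norm2 e)) <= 1 / 4 * (norm2 d + norm2 e).
  by rewrite mulrA; apply: ler_wpM2r => //; rewrite addr_ge0.
nra.
Qed.

End Gap.


Lemma unif (R : realType) (P : R -> R -> Prop) (a b : R) :
  (forall s0, a <= s0 <= b -> exists2 d, 0 < d & exists2 c, 0 < c &
     forall s t, `|s0 - s| < d -> 0 < t -> t < c -> P t s) ->
  exists2 t0, 0 < t0 & forall s, a <= s <= b -> P t0 s.
Proof.
move=> hloc.
have hK : \forall t \near (0 : R)^'+, `[a, b] `<=` P t.
  apply: ((compact_near_coveringP `[a, b]).1 (@segment_compact R a b)).
  move=> s0; rewrite /= in_itv /= => hs0.
  have [d d0 [c c0 h]] := hloc s0 hs0.
  exists ([set s | `|s0 - s| < d], [set t | 0 < t < c]).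
    split.
      by apply/nbhs_ballP; exists d => //= s; rewrite /ball /=.
    by apply: filterS (filterI (nbhs_right_gt 0) (nbhs_right_lt c0)) => t [h1 h2]; rewrite /= h1.
  by move=> [s t] [/= hs /andP [ht1 ht2]]; apply: h.
have [t [t0 ht]] := filter_ex (filterI (nbhs_right_gt 0) hK).
exists t => // s hs; apply: ht; rewrite /= in_itv /=; exact: hs.
Qed.

Section Main.
Variable R : realType.
Variables l m : nat.
Variable f : 'cV[R]_l -> 'cV[R]_m -> 'cV[R]_l.
Variable Dxf : 'cV[R]_l -> 'cV[R]_m -> 'M[R]_l.
Variable Lam : R -> 'cV[R]_m.
Variables lamm lamp : 'cV[R]_m.
Variable X : R -> 'cV[R]_l.
Variable N : nat.
Variable D : 'cV[R]_(l + m) -> 'M[R]_(l, l + m).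
Variables Xm Xp : 'cV[R]_l.
Hypothesis hDx : forall x lam, fderiv (fun y => f y lam) x (Dxf x lam).
Hypothesis hD : forall z, fderiv (fun z : 'cV[R]_(l + m) => f (usubmx z) (dsubmx z)) z (D z).
Hypothesis hDc : continuous D.
Hypothesis hLd : forall s, derivable Lam s 1.
Hypothesis hLm : Lam s @[s --> -oo] --> lamm.
Hypothesis hLp : Lam s @[s --> +oo] --> lamp.
Hypothesis hfix : forall s, f (X s) (Lam s) = X s.
Hypothesis Gconn : connected [set p : R * 'cV[R]_l | p.2 = X p.1].
Hypothesis hXm : X s @[s --> -oo] --> Xm.
Hypothesis hXp : X s @[s --> +oo] --> Xp.
Hypothesis fXm : f Xm lamm = Xm.
Hypothesis fXp : f Xp lamp = Xp.
Hypothesis hN : forall (s : R) (n : nat), (N <= n)%N ->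
     opnorm ((Dxf (X s) (Lam s)) ^+ n) < 1 / 4.

Lemma norm2_mx_lt k (u v : 'cV[R]_k) e : `|u - v| < e / (k%:R + 1) -> norm2 (u - v) <= e.
Proof.
move=> h; apply: le_trans (norm2_le_mxnorm _) _.
have kp : 0 < k%:R + 1 :> R by rewrite ltr_wpDl.
move: h; rewrite ltr_pdivlMr // => h.
have := normr_ge0 (u - v); have : 0 <= k%:R :> R by exact: ler0n.
nra.
Qed.

Lemma Lam_cont s0 e : 0 < e -> exists2 d, 0 < d &
  forall t, `|t - s0| < d -> norm2 (Lam t - Lam s0) <= e.
Proof.
move=> e0.
have hc : {for s0, continuous Lam}.
  have h2 := (derivable1_diffP Lam s0).1 (@hLd s0).
  have := differentiable_continuous h2.
  exact.
have [d d0 hd] := cont_eps hc (divr_gt0 e0 (ltr_wpDl (ler0n _ m) ltr01)).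
exists d => // t ht; apply: norm2_mx_lt; rewrite -normrN opprB; apply: hd.
by rewrite distrC.
Qed.

Lemma lim_p k (g : R -> 'cV[R]_k) (y : 'cV[R]_k) : g s @[s --> +oo] --> y ->
  forall e : R, 0 < e -> exists M : R, forall t, M < t -> norm2 (g t - y) <= e.
Proof.
move=> /cvgr_dist_lt hg e e0.
have := hg _ (divr_gt0 e0 (ltr_wpDl (ler0n _ k) ltr01)).
case=> M [_ hM]; exists M => t ht; apply: norm2_mx_lt; rewrite -normrN opprB.
exact: hM.
Qed.

Lemma lim_m k (g : R -> 'cV[R]_k) (y : 'cV[R]_k) : g s @[s --> -oo] --> y ->
  forall e : R, 0 < e -> exists M : R, forall t, t < M -> norm2 (g t - y) <= e.
Proof.
move=> /cvgr_dist_lt hg e e0.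
have := hg _ (divr_gt0 e0 (ltr_wpDl (ler0n _ k) ltr01)).
case=> M [_ hM]; exists M => t ht; apply: norm2_mx_lt; rewrite -normrN opprB.
exact: hM.
Qed.

Lemma Xcont s0 e : 0 < e -> exists2 d, 0 < d &
  forall t, `|t - s0| < d -> norm2 (X t - X s0) <= e.
Proof.
move=> e0.
have [rho rho0 [K K0 hg]] := gap hDx hD (@hfix s0) (@hN s0 N (leqnn N)).
have K10 : 0 < K + 1 by rewrite ltr_wpDl.
set e1 := Num.min rho (rho / (2 * (K + 1))).
have e10 : 0 < e1 by rewrite lt_min rho0 divr_gt0 // mulr_gt0.
have [d0 d00 hd0] := Lam_cont s0 e10.
have hb : forall t, `|t - s0| < d0 -> norm2 (X t - X s0) <= rho.
  apply: (conn_bound Gconn rho0) => t ht hX.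
  have hl := hd0 t ht.
  have := hg (X t) (Lam t) hX (le_trans hl (minle_l _ _)) (@hfix t).
  have hl2 := le_trans hl (minle_r _ _).
  have q : rho / (2 * (K + 1)) * (K + 1) = rho / 2.
    by field; rewrite gt_eqF.
  have nl := norm2_ge0 (Lam t - Lam s0).
  have : K * norm2 (Lam t - Lam s0) <= K * (rho / (2 * (K + 1))) by exact: ler_wpM2l.
  have w0 : 0 < rho / (2 * (K + 1)) by rewrite divr_gt0 // mulr_gt0.
  nra.
have e20 : 0 < e / (K + 1) by rewrite divr_gt0.
have [d1 d10 hd1] := Lam_cont s0 e20.
exists (Num.min d0 d1); first by rewrite lt_min d00 d10.
move=> t ht.
have ht0 := lt_le_trans ht (minle_l _ _).
have ht1 := lt_le_trans ht (minle_r _ _).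
have hl := hd0 t ht0.
have := hg (X t) (Lam t) (hb t ht0) (le_trans hl (minle_l _ _)) (@hfix t).
have := hd1 t ht1.
have q : e / (K + 1) * (K + 1) = e by field; rewrite gt_eqF.
have w0 := e20.
move=> a b; apply: le_trans b _.
have : K * norm2 (Lam t - Lam s0) <= K * (e / (K + 1)) by exact: ler_wpM2l.
nra.
Qed.

Definition good r0 e0 s := forall r e : R, 0 < r -> r < r0 -> 0 < e -> e < e0 ->
    forall n : nat, (N <= n <= N * N.+1)%N ->
    forall (x : 'cV[R]_l), norm2 (x - X s) <= e ->
      exists A : 'M[R]_l,
        fderiv (fun y : 'cV[R]_l => (iter n (Fr f Lam r) (s, y)).2) x A /\
        opnorm A < 1 / 2.

Let Dcont := Dxf_cont hDx hD hDc.
Let fcont := f_cont hD.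

Lemma local s0 : exists2 d, 0 < d & exists2 c, 0 < c &
  forall s t, `|s0 - s| < d -> 0 < t -> t < c -> good t t s.
Proof.
have [eta eta0 hc] := core hDx Dcont fcont hN (@hfix s0).
have [dX dX0 hX] := Xcont s0 eta0.
have [dL dL0 hL] := Lam_cont s0 eta0.
set n0 := (N * N.+1)%N.
have n0p : 0 < n0%:R + 1 :> R by rewrite ltr_wpDl.
set w := dL / (2 * (n0%:R + 1)).
have w0 : 0 < w by rewrite divr_gt0 // mulr_gt0.
have wq : w * (n0%:R + 1) = dL / 2 by rewrite /w; field; rewrite gt_eqF.
exists (Num.min dX (dL / 2)); first by rewrite lt_min dX0 divr_gt0.
exists (Num.min eta w); first by rewrite lt_min eta0 w0.
move=> s t hs t0 tc r e r0 rt e0 et n hn x hx.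
have hs1 := lt_le_trans hs (minle_l _ _).
have hs2 := lt_le_trans hs (minle_r _ _).
have tc1 := lt_le_trans tc (minle_l _ _).
have tc2 := lt_le_trans tc (minle_r _ _).
apply: (hc s r x n hn).
- by apply: hX; rewrite distrC.
- by apply: le_trans hx _; lra.
- move=> k hk; apply: hL.
  have -> : s + k%:R * r - s0 = (s - s0) + k%:R * r by rewrite addrAC.
  apply: le_lt_trans (ler_normD _ _) _.
  rewrite distrC in hs2.
  rewrite [`|k%:R * r|]ger0_norm; last by apply: mulr_ge0; [exact: ler0n| exact: ltW].
  have kn : k%:R <= n0%:R :> R by rewrite ler_nat.
  have k0 : 0 <= k%:R :> R by exact: ler0n.
  have : k%:R * r <= n0%:R * w.
    apply: ler_pM => //; [exact: ltW | lra].
  lra.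
Qed.

Lemma tail_p : exists M, exists2 c, 0 < c & forall s t, M < s -> 0 < t -> t < c -> good t t s.
Proof.
have [eta eta0 hc] := core hDx Dcont fcont hN fXp.
have [M1 h1] := lim_p hXp eta0.
have [M2 h2] := lim_p hLp eta0.
exists (Num.max M1 M2), eta => // s t hs t0 tc r e r0 rt e0 et n hn x hx.
move: hs; rewrite gt_max => /andP [hs1 hs2].
apply: (hc s r x n hn).
- exact: h1.
- by apply: le_trans hx _; lra.
- move=> k hk; apply: h2.
  have : 0 <= k%:R * r by apply: mulr_ge0; [exact: ler0n| exact: ltW].
  lra.
Qed.

Lemma tail_m : exists M, exists2 c, 0 < c & forall s t, s < M -> 0 < t -> t < c -> good t t s.
Proof.
have [eta eta0 hc] := core hDx Dcont fcont hN fXm.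
have [M1 h1] := lim_m hXm eta0.
have [M2 h2] := lim_m hLm eta0.
set n0 := (N * N.+1)%N.
have n0p : 0 < n0%:R + 1 :> R by rewrite ltr_wpDl.
pose w : R := 1 / (n0%:R + 1).
have w0 : 0 < w by rewrite divr_gt0.
have wq : w * (n0%:R + 1) = 1 by rewrite /w; field; rewrite gt_eqF.
exists (Num.min M1 M2 - 1), (Num.min eta w); first by rewrite lt_min eta0 w0.
move=> s t hs t0 tc r e r0 rt e0 et n hn x hx.
have tc1 := lt_le_trans tc (minle_l _ _).
have tc2 := lt_le_trans tc (minle_r _ _).
have m1 := minle_l M1 M2. have m2 := minle_r M1 M2.
apply: (hc s r x n hn).
- by apply: h1; lra.
- by apply: le_trans hx _; lra.
- move=> k hk; apply: h2.
  have kn : k%:R <= n0%:R :> R by rewrite ler_nat.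
  have k0 : 0 <= k%:R :> R by exact: ler0n.
  have : k%:R * r <= n0%:R * w.
    apply: ler_pM => //; [exact: ltW | lra].
  lra.
Qed.

Lemma main_sec : exists r0 e0 : R, 0 < r0 /\ 0 < e0 /\ forall s, good r0 e0 s.
Proof.
have [Mp [cp cp0 hp]] := tail_p.
have [Mm [cm cm0 hm]] := tail_m.
have [t0 t00 ht0] := unif (P := fun t s => good t t s) (a := Mm) (b := Mp)
   (fun s0 _ => local s0).
set r0 := Num.min t0 (Num.min cp cm) / 2.
have r00 : 0 < r0 by rewrite divr_gt0 // !lt_min t00 cp0 cm0.
have r0t : r0 < t0.
  have := minle_l t0 (Num.min cp cm); rewrite /r0; lra.
have r0p : r0 < cp.
  have := minle_l cp cm; have := minle_r t0 (Num.min cp cm); rewrite /r0; lra.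
have r0m : r0 < cm.
  have := minle_r cp cm; have := minle_r t0 (Num.min cp cm); rewrite /r0; lra.
exists r0, r0; split => //; split => // s.
have [sm|ms] := ltP s Mm; first exact: hm.
have [ps|sp] := ltP Mp s; first exact: hp.
move=> r e r1 rr e1 ee.
have hs : Mm <= s <= Mp by rewrite ms sp.
have rr' : r < t0 by apply: lt_trans rr r0t.
have ee' : e < t0 by apply: lt_trans ee r0t.
exact: (ht0 s hs r e r1 rr' e1 ee').
Qed.

End Main.


Theorem mainTheorem14 (R : realType) (l m : nat)
  (f : 'cV[R]_l -> 'cV[R]_m -> 'cV[R]_l)
  (Dxf : 'cV[R]_l -> 'cV[R]_m -> 'M[R]_l)
  (Lam : R -> 'cV[R]_m) (lamm lamp : 'cV[R]_m) (X : R -> 'cV[R]_l) (N : nat) :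
  C1_2 f ->
  (forall (x : 'cV[R]_l) (lam : 'cV[R]_m), fderiv (fun y => f y lam) x (Dxf x lam)) ->
  parameter_shift Lam lamm lamp ->
  stable_path f Dxf Lam lamm lamp X ->
  (forall (s : R) (n : nat), (N <= n)%N ->
     opnorm ((Dxf (X s) (Lam s)) ^+ n) < 1 / 4) ->
  exists r0 e0 : R, 0 < r0 /\ 0 < e0 /\
    forall r e : R, 0 < r -> r < r0 -> 0 < e -> e < e0 ->
    forall n : nat, (N <= n <= N * N.+1)%N ->
    forall (s : R) (x : 'cV[R]_l), norm2 (x - X s) <= e ->
      exists A : 'M[R]_l,
        fderiv (fun y : 'cV[R]_l => (iter n (Fr f Lam r) (s, y)).2) x A /\
        opnorm A < 1 / 2.
Proof.
move=> [D [hD hDc]] hDx [hLd [_ [hLm [hLp _]]]].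
move=> [hfix [Gconn [Xm [Xp [hXm [hXp [fXm [fXp _]]]]]]]] hN.
have [r0 [e0 [r00 [e00 hg]]]] :=
  main_sec hDx hD hDc hLd hLm hLp hfix Gconn hXm hXp fXm fXp hN.
exists r0, e0; split => //; split => // r e r1 rr e1 ee n hn s x hx.
exact: (hg s r e r1 rr e1 ee n hn x hx).
Qed.
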